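(* Let $n\geq1$. If $\psi$ is a Toom cycle in $G=G_{2n}(\mathbb T\ltimes\mathbb N^2)$ or in $G=G_{2n}(\mathbb N^2\ltimes\mathbb N^2)$, then there exists an integer $m\geq1$ such that: - the number of steps of each of the types su, sd, lu, ld, ru, rd in $\psi$ equals $m$; - $\psi$ passes through precisely $m+1$ distinct possible outcomes of the game (elements of $\partial G$).
   Context: **Decision graphs.** - $\mathbb T$ is the set of finite words over $\{1,2\}$ with root $\varnothing$, edges $\mathbf i\to\mathbf ik$, and $|\mathbf i|$ = length. - $\mathbb N^2$ has root $(0,0)$ and edges $(i,j)\to(i,j)1:=(i+1,j)$ and $(i,j)\to(i,j)2:=(i,j+1)$, with $|(i,j)|=i+j$. **Product and game-graph.** For $D^1\in\{\mathbb T,\mathbb N^2\}$, $D^1\ltimes\mathbb N^2$ has as vertices the pairs $(a,b)$ with $|a|=|b|$ (level $2|b|$) or $|a|=|b|+1$ (level $2|b|+1$), root $(0,0)$, edges $(a,b)\to(ak,b)$ from even levels and $(a,b)\to(a,bk)$ from odd levels. $G_{2n}(D^1\ltimes\mathbb N^2)$ is its restriction to levels $\leq 2n$. Level $2n$ is $\partial G$ (possible outcomes); interior vertices at even levels are Alice's turn and those at odd levels are Bob's. Let $\mathring G$ be the non-outcome vertices, $\vec A$ the set of edges $((a,b),(ak,b))$ from Alice-turn vertices, and $\vec B_k$ the set of edges $((a,b),(a,bk))$ from Bob-turn vertices. **Walks and step types.** A walk is $\psi_0\cdots\psi_l$ with each consecutive pair an edge or a reversed edge. The $k$-th step is: - su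 if $(\psi_{k-1},\psi_k)\in\vec A$, and sd if $(\psi_k,\psi_{k-1})\in\vec A$; - lu if $(\psi_{k-1},\psi_k)\in\vec B_2$, and ld if $(\psi_k,\psi_{k-1})\in\vec B_1$; - ru if $(\psi_{k-1},\psi_k)\in\vec B_1$, and rd if $(\psi_k,\psi_{k-1})\in\vec B_2$. Up types are su, lu, ru; down types are sd, ld, rd. Let - $N_\uparrow=\{0\}\cup\{0<k<l:$ steps $k,k+1$ up$\}$, - $N_\circ=\{0<k<l:$ step $k$ down, $k+1$ up$\}$, - $N_\downarrow=\{l\}\cup\{0<k<l:$ both down$\}$, - $N_\ast=\{0<k<l:$ step $k$ up, $k+1$ down$\}$. **Toom cycle.** A Toom cycle is a walk with $l\geq2$ satisfying all of the following. - $\psi_0=\psi_l=$ root; the first step is su or ru; the last step is sd or rd. - For $0<k<l$ with $\psi_k\in\mathring G$, the only allowed (step $k$ $\to$ step $k+1$) combinations are su$\to$ru, ru$\to$su, lu$\to$su, sd$\to$rd or ld, rd$\to$sd, ld$\to$lu. - For $\psi_k\in\partial G$, the only allowed combinations are su$\to$sd, ru$\to$rd or ld, lu$\to$rd or ld. - (i) $\psi_k\neq\psi_m$ for distinct $k,m\in N_\ast$. - (ii) If $\psi_k=\psi_m$ with $k\in N_s$, $m\in N_t$, $s\leq t$ in the order $\uparrow<\circ<\downarrow$, then $k\leq m$. *)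

(* Defs.v *)
From HB Require Import structures.
From mathcomp Require Import all_boot.
Set Implicit Arguments. Unset Strict Implicit. Unset Printing Implicit Defensive.

Inductive dir := d1 | d2.

Record DecGraph := { dvert : eqType; droot : dvert;
                     dchild : dvert -> dir -> dvert; dlen : dvert -> nat }.

Definition dir_eqb (x y : dir) : bool :=
  match x, y with d1, d1 | d2, d2 => true | _, _ => false end.
Lemma dir_eqP : Equality.axiom dir_eqb. Proof. by case; case; constructor. Qed.
HB.instance Definition _ := hasDecEq.Build dir dir_eqP.

Definition Tgraph : DecGraph :=
  {| dvert := seq dir; droot := [::]; dchild := fun w k => rcons w k;
     dlen := fun w => size w |}.

Definition child2 (b : nat * nat) (k : dir) : nat * nat :=
  match k with d1 => (b.1.+1, b.2) | d2 => (b.1, b.2.+1) end.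
Definition len2 (b : nat * nat) : nat := b.1 + b.2.

Definition N2graph : DecGraph :=
  {| dvert := (nat * nat)%type; droot := (0, 0); dchild := child2; dlen := len2 |}.

Section Game.
Variable D : DecGraph.
Variable n : nat.

Definition pvert := (dvert D * (nat * nat))%type.
Definition proot : pvert := (droot D, (0, 0)).
Definition level (v : pvert) := dlen v.1 + len2 v.2.

Definition inG (v : pvert) : bool :=
  ((dlen v.1 == len2 v.2) || (dlen v.1 == (len2 v.2).+1)) && (level v <= n.*2).
Definition outcome (v : pvert) : bool := inG v && (level v == n.*2).
Definition interior (v : pvert) : bool := inG v && (level v < n.*2).

Definition edgeA (x y : pvert) : bool :=
  [&& interior x, inG y, dlen x.1 == len2 x.2 &
     (y == (dchild x.1 d1, x.2)) || (y == (dchild x.1 d2, x.2))].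
Definition edgeB (k : dir) (x y : pvert) : bool :=
  [&& interior x, inG y, dlen x.1 == (len2 x.2).+1 & y == (x.1, child2 x.2 k)].

Inductive stype := SU | SD | LU | LD | RU | RD.

Definition is_step (t : stype) (x y : pvert) : bool :=
  match t with
  | SU => edgeA x y | SD => edgeA y x
  | LU => edgeB d2 x y | LD => edgeB d1 y x
  | RU => edgeB d1 x y | RD => edgeB d2 y x
  end.

Variable psi : nat -> pvert.
Variable l : nat.

(* step k goes from psi (k-1) to psi k *)
Definition step_is (t : stype) (k : nat) : bool := is_step t (psi k.-1) (psi k).
Definition step_up k := [|| step_is SU k, step_is LU k | step_is RU k].
Definition step_down k := [|| step_is SD k, step_is LD k | step_is RD k].

Definition is_walk : Prop :=
  forall k, 0 < k <= l -> step_up k || step_down k.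

Definition N_up k := (k == 0) || [&& 0 < k < l, step_up k & step_up k.+1].
Definition N_circ k := [&& 0 < k < l, step_down k & step_up k.+1].
Definition N_down k := (k == l) || [&& 0 < k < l, step_down k & step_down k.+1].
Definition N_ast k := [&& 0 < k < l, step_up k & step_down k.+1].

Definition allowed_interior (t1 t2 : stype) : bool :=
  match t1, t2 with
  | SU, RU | RU, SU | LU, SU | SD, RD | SD, LD | RD, SD | LD, LU => true
  | _, _ => false
  end.
Definition allowed_outcome (t1 t2 : stype) : bool :=
  match t1, t2 with
  | SU, SD | RU, RD | RU, LD | LU, RD | LU, LD => true
  | _, _ => false
  end.

Definition toom_cycle : Prop :=
  2 <= l /\ is_walk /\ psi 0 = proot /\ psi l = proot /\
      (step_is SU 1 || step_is RU 1) /\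
      (step_is SD l || step_is RD l) /\
      (forall k, 0 < k < l -> interior (psi k) -> forall t1 t2,
          step_is t1 k -> step_is t2 k.+1 -> allowed_interior t1 t2) /\
      (forall k, 0 < k < l -> outcome (psi k) -> forall t1 t2,
          step_is t1 k -> step_is t2 k.+1 -> allowed_outcome t1 t2) /\
      (forall k m, N_ast k -> N_ast m -> k <> m -> psi k <> psi m) /\
      (* (ii), with the order up < circ < down *)
      (forall k m, psi k = psi m ->
         [|| N_up k && [|| N_up m, N_circ m | N_down m],
             N_circ k && (N_circ m || N_down m) |
             N_down k && N_down m] -> k <= m).

Definition nsteps (t : stype) : nat := count (step_is t) (iota 1 l).
Definition noutcomes : nat :=
  size (undup [seq psi k | k <- iota 0 l.+1 & outcome (psi k)]).

End Game.

(* Main.v *)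
Require Import Defs.
From mathcomp Require Import all_boot zify.
Set Implicit Arguments. Unset Strict Implicit. Unset Printing Implicit Defensive.

Lemma count_shift (P Q : pred nat) l :
  (forall k, 0 < k < l -> P k = Q k.+1) -> P l = false -> Q 1 = false ->
  count P (iota 1 l) = count Q (iota 1 l).
Proof.
case: l => [|l] // HPQ HPl HQ1.
have -> : count P (iota 1 l.+1) = count P (iota 1 l).
  by rewrite -[l.+1]addn1 iotaD count_cat /= add1n HPl !addn0.
rewrite /= HQ1 add0n.
rewrite (iotaDl 1 1) count_map.
apply: eq_in_count => k; rewrite mem_iota => Hk /=.
rewrite add1n HPQ //; lia.
Qed.

Lemma balance (f : nat -> nat) (P Q : pred nat) l :
  (forall k, 0 < k <= l -> f k + Q k = f k.-1 + P k) ->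
  f l + count Q (iota 1 l) = f 0 + count P (iota 1 l).
Proof.
elim: l => [|l IH] H; first by rewrite !addn0.
rewrite -[l.+1]addn1 iotaD !count_cat /= add1n.
rewrite addn1; have := H l.+1 (ltnSn l); have := IH (fun k hk => H k ltac:(lia)). simpl. lia.
Qed.

Lemma peaks (u : nat -> bool) l :
  count (fun k => u k && ~~ u k.+1) (iota 1 l) + u l.+1 =
  count (fun k => ~~ u k && u k.+1) (iota 1 l) + u 1.
Proof.
elim: l => [|l IH] //.
rewrite -[l.+1]addn1 iotaD !count_cat /= add1n.
rewrite addn1. move: IH; case: (u l.+1); case: (u l.+2) => /=; lia.
Qed.
Section G.
Variable D : DecGraph.
Hypothesis Hch : forall (a : dvert D) d, dlen (dchild a d) = (dlen a).+1.
Variable n : nat.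

Lemma len2_child2 b k : len2 (child2 b k) = (len2 b).+1.
Proof. by case: k; rewrite /len2 /= ?addSn ?addnS. Qed.

Lemma edgeA_lv (x y : pvert D) : edgeA n x y ->
  [/\ inG n x, inG n y, ~~ odd (level x), level y = (level x).+1 & y.2 = x.2].
Proof.
case/and4P => /andP[Hx _] Hy /eqP He /orP[] /eqP Ey; rewrite Ey in Hy *;
  rewrite /level /= Hch He addSn addnn odd_double; by split.
Qed.

Lemma edgeB_lv k (x y : pvert D) : edgeB n k x y ->
  [/\ inG n x, inG n y, odd (level x), level y = (level x).+1 & y = (x.1, child2 x.2 k)].
Proof.
case/and4P => /andP[Hx _] Hy /eqP He /eqP Ey; rewrite Ey in Hy *;
  rewrite /level /= len2_child2 He addSn addnn /= odd_double; split => //; lia.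
Qed.

Lemma child2_neq b : child2 b d1 <> child2 b d2.
Proof. case: b => a c /= [] ; lia. Qed.

Lemma is_step_uniq t1 t2 (x y : pvert D) :
  is_step n t1 x y -> is_step n t2 x y -> t1 = t2.
Proof.
case: t1; case: t2 => //= A B;
 repeat match goal with
 | H : is_true (edgeA _ _ _) |- _ => move/edgeA_lv: H => [? ? ? ? ?]
 | H : is_true (edgeB _ _ _ _) |- _ => move/edgeB_lv: H => [? ? ? ? ?]
 end; subst; simpl in *;
 try match goal with H : odd ?a, H' : is_true (~~ odd ?a) |- _ => by rewrite H in H' end;
 try lia;
 try (exfalso; match goal with H : (_, _) = (_, _) |- _ => case: H end;
      lia).
Qed.


Hypothesis Hroot : dlen (droot D) = 0.
Hypothesis Hn : 0 < n.
Variable psi : nat -> pvert D.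
Variable l : nat.
Hypothesis Htc : toom_cycle n psi l.

Lemma level_root : level (proot D) = 0.
Proof. by rewrite /level /proot /= Hroot. Qed.

Lemma step_lv t k : step_is n psi t k ->
  [/\ inG n (psi k.-1), inG n (psi k) & match t with
  | SU => ~~ odd (level (psi k.-1)) /\ level (psi k) = (level (psi k.-1)).+1
  | RU | LU => odd (level (psi k.-1)) /\ level (psi k) = (level (psi k.-1)).+1
  | SD => ~~ odd (level (psi k)) /\ level (psi k.-1) = (level (psi k)).+1
  | RD | LD => odd (level (psi k)) /\ level (psi k.-1) = (level (psi k)).+1
  end].
Proof.
rewrite /step_is; case: t => /=.
- by case/edgeA_lv => *.
- by case/edgeA_lv => *.
- by case/edgeB_lv => *.
- by case/edgeB_lv => *.
- by case/edgeB_lv => *.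
- by case/edgeB_lv => *.
Qed.

Lemma step_b t k : step_is n psi t k ->
  match t with
  | SU | SD => (psi k).2 = (psi k.-1).2
  | RU => (psi k).2 = ((psi k.-1).2.1.+1, (psi k.-1).2.2)
  | LU => (psi k).2 = ((psi k.-1).2.1, (psi k.-1).2.2.+1)
  | LD => (psi k.-1).2 = ((psi k).2.1.+1, (psi k).2.2)
  | RD => (psi k.-1).2 = ((psi k).2.1, (psi k).2.2.+1)
  end.
Proof.
rewrite /step_is; case: t => /=.
- by case/edgeA_lv => *.
- by case/edgeA_lv => _ _ _ _ ->.
- by case/edgeB_lv => _ _ _ _ ->.
- by case/edgeB_lv => _ _ _ _ ->.
- by case/edgeB_lv => _ _ _ _ ->.
- by case/edgeB_lv => _ _ _ _ ->.
Qed.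

Lemma inG_le (v : pvert D) : inG n v -> level v <= n.*2.
Proof. by case/andP. Qed.

Lemma step_det t t' k : step_is n psi t k -> step_is n psi t' k -> t' = t.
Proof. by move=> H H'; apply: (is_step_uniq H' H). Qed.

Lemma stepF t t' k : step_is n psi t k -> t' <> t -> step_is n psi t' k = false.
Proof. by move=> H Hne; apply/negP => /(step_det H). Qed.

Lemma ex_step k : 0 < k <= l -> exists t, step_is n psi t k.
Proof.
case: Htc => _ [Hw _] /Hw.
by case/orP => /or3P[] H; eexists; exact: H.
Qed.

Lemma trans k t1 t2 : 0 < k < l -> step_is n psi t1 k -> step_is n psi t2 k.+1 ->
  (level (psi k) < n.*2) && allowed_interior t1 t2 ||
  (level (psi k) == n.*2) && allowed_outcome t1 t2.
Proof.
move=> Hk H1 H2.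
case: Htc => _ [_ [_ [_ [_ [_ [Hint [Hout _]]]]]]].
have [_ HG _] := step_lv H1.
have := inG_le HG; rewrite leq_eqVlt => /orP[] E.
- by rewrite (Hout k Hk) ?E ?orbT //; rewrite /outcome HG.
- by rewrite (Hint k Hk) ?E //; rewrite /interior HG.
Qed.

Lemma trans_odd k t1 t2 : 0 < k < l -> odd (level (psi k)) ->
  step_is n psi t1 k -> step_is n psi t2 k.+1 -> allowed_interior t1 t2.
Proof.
move=> Hk Ho H1 H2; case/orP: (trans Hk H1 H2) => /andP[E A] //.
by rewrite (eqP E) odd_double in Ho.
Qed.

Lemma tc_l : 2 <= l. Proof. by case: Htc. Qed.
Lemma tc_0 : psi 0 = proot D. Proof. by case: Htc => _ [_ []]. Qed.
Lemma tc_end : psi l = proot D. Proof. by case: Htc => _ [_ [_ []]]. Qed.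
Lemma tc_first : step_is n psi SU 1 || step_is n psi RU 1.
Proof. by case: Htc => _ [_ [_ [_ []]]]. Qed.
Lemma tc_last : step_is n psi SD l || step_is n psi RD l.
Proof. by case: Htc => _ [_ [_ [_ [_ []]]]]. Qed.

Lemma lv0 : level (psi 0) = 0. Proof. by rewrite tc_0 level_root. Qed.
Lemma lvl : level (psi l) = 0. Proof. by rewrite tc_end level_root. Qed.

Lemma noRD_l : step_is n psi RD l = false.
Proof. apply/negP => /step_lv[_ _ []]; by rewrite lvl. Qed.
Lemma SD_l : step_is n psi SD l.
Proof. by move: tc_last; rewrite noRD_l orbF. Qed.
Lemma noSD_1 : step_is n psi SD 1 = false.
Proof. apply/negP => /step_lv[_ _ []] /= _; by rewrite lv0. Qed.
Lemma noRU_1 : step_is n psi RU 1 = false.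
Proof. apply/negP => /step_lv[_ _ []] /=; by rewrite lv0. Qed.
Lemma noLU_1 : step_is n psi LU 1 = false.
Proof. apply/negP => /step_lv[_ _ []] /=; by rewrite lv0. Qed.
Lemma SU_1 : step_is n psi SU 1.
Proof. by move: tc_first; rewrite noRU_1 orbF. Qed.
Lemma noSU_l : step_is n psi SU l = false.
Proof. by rewrite (stepF SD_l). Qed.
Lemma noLD_l : step_is n psi LD l = false.
Proof. by rewrite (stepF SD_l). Qed.

Lemma pair_SU k : 0 < k < l -> step_is n psi SU k = step_is n psi RU k.+1.
Proof.
move=> Hk; apply/idP/idP => H.
- have [t2 H2] := ex_step (k:=k.+1) ltac:(lia).
  have [_ _ [_ E]] := step_lv H.
  have Ho : odd (level (psi k)) by rewrite E /=; case: (step_lv H) => _ _ [-> _].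
  by case: t2 H2 (trans_odd Hk Ho H H2).
- have [t1 H1] := ex_step (k:=k) ltac:(lia).
  have [_ _ [Ho _]] := step_lv H.
  by case: t1 H1 (trans_odd Hk Ho H1 H).
Qed.

Lemma pair_LD k : 0 < k < l -> step_is n psi LD k = step_is n psi LU k.+1.
Proof.
move=> Hk; apply/idP/idP => H.
- have [t2 H2] := ex_step (k:=k.+1) ltac:(lia).
  have [_ _ [Ho _]] := step_lv H.
  by case: t2 H2 (trans_odd Hk Ho H H2).
- have [t1 H1] := ex_step (k:=k) ltac:(lia).
  have [_ _ [Ho _]] := step_lv H.
  by case: t1 H1 (trans_odd Hk Ho H1 H).
Qed.

Lemma pair_RD k : 0 < k < l -> step_is n psi RD k = step_is n psi SD k.+1.
Proof.
move=> Hk; apply/idP/idP => H.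
- have [t2 H2] := ex_step (k:=k.+1) ltac:(lia).
  have [_ _ [Ho _]] := step_lv H.
  by case: t2 H2 (trans_odd Hk Ho H H2).
- have [t1 H1] := ex_step (k:=k) ltac:(lia).
  have [_ _ [He E]] := step_lv H.
  have Ho : odd (level (psi k)) by move: E => /= ->; rewrite /= He.
  by case: t1 H1 (trans_odd Hk Ho H1 H).
Qed.

Lemma bal1 : count (step_is n psi RU) (iota 1 l) = count (step_is n psi LD) (iota 1 l).
Proof.
suff: (psi l).2.1 + count (step_is n psi LD) (iota 1 l) = (psi 0).2.1 + count (step_is n psi RU) (iota 1 l)
  by rewrite tc_end -tc_0; lia.
apply: (@balance (fun k => (psi k).2.1) (step_is n psi RU) (step_is n psi LD) l) => k Hk; have [t H] := ex_step Hk; have B := step_b H.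
case: t H B => H B; rewrite ?H ?(stepF H (t':=RU)) ?(stepF H (t':=LD)) //;
  rewrite ?B //=; lia.
Qed.

Lemma bal2 : count (step_is n psi LU) (iota 1 l) = count (step_is n psi RD) (iota 1 l).
Proof.
suff: (psi l).2.2 + count (step_is n psi RD) (iota 1 l) = (psi 0).2.2 + count (step_is n psi LU) (iota 1 l)
  by rewrite tc_end -tc_0; lia.
apply: (@balance (fun k => (psi k).2.2) (step_is n psi LU) (step_is n psi RD) l) => k Hk; have [t H] := ex_step Hk; have B := step_b H.
case: t H B => H B; rewrite ?H ?(stepF H (t':=LU)) ?(stepF H (t':=RD)) //;
  rewrite ?B //=; lia.
Qed.

Ltac evals H := rewrite ?H ?(stepF H (t':=SU)) ?(stepF H (t':=SD)) ?(stepF H (t':=LU))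
  ?(stepF H (t':=LD)) ?(stepF H (t':=RU)) ?(stepF H (t':=RD)) //.

Lemma up_down k : 0 < k <= l -> step_down n psi k = ~~ step_up n psi k.
Proof.
move=> Hk; have [t H] := ex_step Hk; rewrite /step_up /step_down.
by case: t H => H; evals H.
Qed.

Lemma out_peak k : 0 < k < l ->
  outcome n (psi k) = step_up n psi k && ~~ step_up n psi k.+1.
Proof.
move=> Hk; have [t1 H1] := ex_step (k:=k) ltac:(lia).
have [t2 H2] := ex_step (k:=k.+1) ltac:(lia).
have T := trans Hk H1 H2.
case: (step_lv H1) => G1 G1' L1; case: (step_lv H2) => G2 G2' L2.
have := inG_le G1; have := inG_le G2'; rewrite /step_up /outcome G1'.
case: t1 H1 L1 T; case: t2 H2 L2 => H2 [a2 b2] H1 [a1 b1] T; simpl in T; rewrite ?andbF ?orbF ?andbT in T; evals H1; evals H2;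
  rewrite ?succnK in a2 b2; rewrite /=; lia.
Qed.

Lemma valley k : 0 < k < l ->
  ~~ step_up n psi k && step_up n psi k.+1 = step_is n psi LD k.
Proof.
move=> Hk; have [t1 H1] := ex_step (k:=k) ltac:(lia).
have [t2 H2] := ex_step (k:=k.+1) ltac:(lia).
have T := trans Hk H1 H2.
rewrite /step_up.
case: t1 H1 T; case: t2 H2 => H2 H1 T; simpl in T; rewrite ?andbF ?orbF ?andbT in T; evals H1; evals H2; rewrite /=; lia.
Qed.

Lemma no_out0 : outcome n (psi 0) = false.
Proof. rewrite /outcome tc_0 level_root; apply/negP => /andP[_ /eqP]; lia. Qed.
Lemma no_outl : outcome n (psi l) = false.
Proof. rewrite /outcome tc_end level_root; apply/negP => /andP[_ /eqP]; lia. Qed.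

Lemma iota_split : iota 1 l = iota 1 l.-1 ++ [:: l].
Proof.
have Hl0 : 0 < l by have := tc_l; lia.
by rewrite -{1}(prednK Hl0) -[l.-1.+1]addn1 iotaD /= add1n prednK.
Qed.

Lemma main_sec : exists m : nat, 1 <= m /\
      (forall t : stype, nsteps n psi l t = m) /\
      noutcomes n psi l = m.+1.
Proof.
have Hl := tc_l.
have e1 : count (step_is n psi SU) (iota 1 l) = count (step_is n psi RU) (iota 1 l).
  by apply: count_shift; [exact: pair_SU | exact: noSU_l | exact: noRU_1].
have e2 : count (step_is n psi LD) (iota 1 l) = count (step_is n psi LU) (iota 1 l).
  by apply: count_shift; [exact: pair_LD | exact: noLD_l | exact: noLU_1].
have e3 : count (step_is n psi RD) (iota 1 l) = count (step_is n psi SD) (iota 1 l).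
  by apply: count_shift; [exact: pair_RD | exact: noRD_l | exact: noSD_1].
have e4 := bal1; have e5 := bal2.
exists (count (step_is n psi SU) (iota 1 l)); split; [|split].
- rewrite -has_count; apply/hasP; exists 1; last exact: SU_1.
  rewrite mem_iota; lia.
- by case; rewrite /nsteps; lia.
have U : uniq [seq psi k | k <- iota 0 l.+1 & outcome n (psi k)].
  rewrite map_inj_in_uniq ?filter_uniq ?iota_uniq //.
  move=> x y; rewrite !mem_filter !mem_iota => /andP[Ox Rx] /andP[Oy Ry] E.
  case: (eqVneq x y) => // Hne; exfalso.
  have Hx : 0 < x < l.
    case: x Ox Rx {Hne E} => [|x]; first by rewrite no_out0.
    case: (eqVneq x.+1 l) => [->|]; first by rewrite no_outl.
    move=> ? _ ?; lia.
  have Hy : 0 < y < l.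
    case: y Oy Ry {Hne E} => [|y]; first by rewrite no_out0.
    case: (eqVneq y.+1 l) => [->|]; first by rewrite no_outl.
    move=> ? _ ?; lia.
  case: Htc => _ [_ [_ [_ [_ [_ [_ [_ [Hi _]]]]]]]].
  apply: (Hi x y) E; last by apply/eqP.
  + rewrite /N_ast Hx /=; rewrite out_peak // in Ox; case/andP: Ox => -> ? /=.
    by rewrite up_down //; lia.
  + rewrite /N_ast Hy /=; rewrite out_peak // in Oy; case/andP: Oy => -> ? /=.
    by rewrite up_down //; lia.
rewrite /noutcomes (undup_id U) size_map size_filter /=.
rewrite no_out0 add0n [in LHS]iota_split count_cat /= no_outl /= addn0.
have P := peaks (step_up n psi) l.-1.
rewrite prednK in P; last lia.
have Ul : step_up n psi l = false.
  by apply/negP => Hu; move: (up_down (k:=l) ltac:(lia)); rewrite /step_down SD_l Hu.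
have U1 : step_up n psi 1 by rewrite /step_up SU_1.
rewrite Ul U1 in P.
have P' : count (fun k => step_up n psi k && ~~ step_up n psi k.+1) (iota 1 l.-1) + 0 =
  count (fun k => ~~ step_up n psi k && step_up n psi k.+1) (iota 1 l.-1) + 1 := P.
rewrite e1 e4.
have -> : count (step_is n psi LD) (iota 1 l) = count (step_is n psi LD) (iota 1 l.-1).
  rewrite [in LHS]iota_split count_cat.
  have -> : count (step_is n psi LD) [:: l] = step_is n psi LD l + 0 by [].
  by rewrite noLD_l !addn0.
rewrite -(eq_in_count (a1 := fun k => ~~ step_up n psi k && step_up n psi k.+1) (a2 := step_is n psi LD)); last first.
  by move=> k; rewrite mem_iota => Hk; apply: valley; lia.
rewrite (eq_in_count (a1 := fun k => outcome n (psi k))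
   (a2 := fun k => step_up n psi k && ~~ step_up n psi k.+1)); last first.
  move=> k; rewrite mem_iota => Hk; apply: out_peak; lia.
move: P' => ->; by rewrite addn1.
Qed.
End G.

Lemma Tch (a : dvert Tgraph) d : dlen (dchild a d) = (dlen a).+1.
Proof. by rewrite /= size_rcons. Qed.
Lemma N2ch (a : dvert N2graph) d : dlen (dchild a d) = (dlen a).+1.
Proof. exact: len2_child2. Qed.

Theorem lemma11 :
  forall (D : DecGraph), (D = Tgraph \/ D = N2graph) ->
  forall (n : nat) (psi : nat -> pvert D) (l : nat),
    1 <= n -> toom_cycle n psi l ->
    exists m : nat, 1 <= m /\
      (forall t : stype, nsteps n psi l t = m) /\
      noutcomes n psi l = m.+1.
Proof.
move=> D [] -> n psi l Hn Htc.
- by apply: main_sec => //; exact: Tch.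
- by apply: main_sec => //; exact: N2ch.
Qed.
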